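(* Let $\mathcal H=\bigoplus_{n=1}^\infty\mathbb C^n$, let $\{e_{n,i}\}_{i=1}^n$ be the canonical orthonormal basis of $\mathbb C^n$, and let $V=\bigoplus_{n=1}^\infty V_n$, where $V_n\in M_n(\mathbb C)$ is the upper shift matrix, $V_ne_{n,i}=e_{n,i-1}$ (with $e_{n,0}=0$). Then for every nonzero Hilbert space $\mathcal K$ there is no idempotent $P\in\mathcal B(\mathcal K\otimes\mathcal H)$ such that $P(I\otimes V)=(I\otimes V)P$ and $I\otimes V-P$ is invertible; i.e. $I\otimes V$ is not strongly clean in $\mathcal B(\mathcal K\otimes\mathcal H)$.
   Context: An element $T$ of a unital ring is strongly clean if $T=U+P$ with $U$ invertible, $P$ idempotent and $PT=TP$. *)

(* Defs.v *)
From HB Require Import structures.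
From mathcomp Require Import all_boot all_order all_algebra.
From mathcomp Require Import complex.
From mathcomp Require Import boolp classical_sets reals constructive_ereal ereal esum.

Set Implicit Arguments.
Unset Strict Implicit.
Unset Printing Implicit Defensive.

Import Order.TTheory GRing.Theory Num.Theory.
Local Open Scope ring_scope.

(* Vectors are functions X -> R[i]; an "operator" is a function               *)
(* (X -> R[i]) -> (X -> R[i]) considered only through its values on l^2.     *)

Section L2.
Variables (R : realType) (X : choiceType).
Local Notation C := (R[i]).

Definition abs2 (z : C) : R := (complex.Re z) ^+ 2 + (complex.Im z) ^+ 2.

Definition sqnorm (f : X -> C) : \bar R :=
  \esum_(x in [set: X]) (abs2 (f x))%:E.

Definition l2 (f : X -> C) : Prop := (sqnorm f < +oo)%E.

Definition bounded_op (A : (X -> C) -> (X -> C)) : Prop :=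
  [/\ forall f, l2 f -> l2 (A f),
      forall (a : C) f g, l2 f -> l2 g ->
        A (fun x => a * f x + g x) = (fun x => a * A f x + A g x)
    & exists M : R, forall f, l2 f -> (sqnorm (A f) <= M%:E * sqnorm f)%E].

Definition op_eq (A B : (X -> C) -> (X -> C)) : Prop :=
  forall f, l2 f -> A f = B f.

Definition op_comp (A B : (X -> C) -> (X -> C)) := fun f => A (B f).
Definition op_add (A B : (X -> C) -> (X -> C)) := fun f x => A f x + B f x.
Definition op_id : (X -> C) -> (X -> C) := fun f => f.

Definition op_invertible (U : (X -> C) -> (X -> C)) : Prop :=
  bounded_op U /\ exists W, bounded_op W /\
    op_eq (op_comp W U) op_id /\ op_eq (op_comp U W) op_id.

Definition op_idempotent (P : (X -> C) -> (X -> C)) : Prop :=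
  bounded_op P /\ op_eq (op_comp P P) P.

Definition strongly_clean (T : (X -> C) -> (X -> C)) : Prop :=
  exists U P, op_invertible U /\ op_idempotent P /\
    op_eq (op_comp P T) (op_comp T P) /\ op_eq T (op_add U P).

End L2.

(* H = (+)_{n>=1} C^n is l^2(hidx) with hidx = {m : nat & 'I_m.+1}:         *)
(* the pair (m, i) is the basis vector e_{m+1, i+1} of C^{m+1}.              *)
(* K (a nonzero Hilbert space) is l^2(J) for a nonempty index set J (the     *)
(* index set of an orthonormal basis), and K (x) H = l^2(J * hidx) with      *)
(* e_j (x) e_{n,i} the basis vector indexed by (j, (n-1, i-1)).              *)

Definition hidx : Type := {m : nat & 'I_m.+1}.
HB.instance Definition _ := Choice.on hidx.

(* I (x) V on K (x) H, where V = (+)_n V_n, V_n e_{n,i} = e_{n,i-1},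
   e_{n,0} = 0.  In coordinates: (V f)_{n,i} = f_{n,i+1} (0 if i = n). *)
Definition IxV (R : realType) (J : choiceType)
    (f : (J * hidx)%type -> R[i]) : (J * hidx)%type -> R[i] :=
  fun p => let: (j, existT m k) := p in
    if (k.+1 < m.+1)%N then f (j, existT (fun m => 'I_m.+1) m (inord k.+1))
    else 0.

(* Main.v *)
Require Import Defs.
From HB Require Import structures.
From mathcomp Require Import all_boot all_order all_algebra.
From mathcomp Require Import complex.
From mathcomp Require Import boolp classical_sets reals constructive_ereal ereal esum.
From mathcomp Require Import zify.

Set Implicit Arguments.
Unset Strict Implicit.
Unset Printing Implicit Defensive.
Import Order.TTheory GRing.Theory Num.Theory.
Local Open Scope ring_scope.

Section Aux.
Variables (R : realType) (J : choiceType) (j0 : J) (n : nat).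
Local Notation C := (R[i]).
Local Notation X := (J * hidx)%type.

Definition dl (k : nat) : X -> C := fun p => let: (j, existT m i) := p in
  if [&& j == j0, m == n & (nat_of_ord i == k)] then 1 else 0.
Definition sl (k : nat) : X -> C := fun p => let: (j, existT m i) := p in
  if [&& j == j0, m == n & (nat_of_ord i <= k)%N] then 1 else 0.

Lemma abs2_ge0 (z : C) : 0 <= abs2 z.
Proof. by rewrite /abs2 addr_ge0 // sqr_ge0. Qed.

Lemma abs2_0 : abs2 (0 : C) = 0.
Proof. by rewrite /abs2 /= expr0n addr0. Qed.

Lemma abs2_1 : abs2 (1 : C) = 1.
Proof. by rewrite /abs2 /= expr0n expr1n addr0. Qed.

Lemma abs2_N (z : C) : abs2 (- z) = abs2 z.
Proof. by case: z => a b; rewrite /abs2 /= !sqrrN. Qed.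

Lemma sqnorm0 : sqnorm (fun _ : X => (0 : C)) = 0%E.
Proof. by rewrite /sqnorm esum1 // => x _; rewrite abs2_0. Qed.

Lemma l2_0 : l2 (fun _ : X => (0 : C)).
Proof. by rewrite /l2 sqnorm0 ltry. Qed.

Lemma T_dl0 : IxV (dl 0) = fun _ => 0.
Proof.
apply/funext => -[j [m i]]; rewrite /IxV /dl.
case: ifP => // H; rewrite inordK //.
by case: (_ == _); case: (_ == _).
Qed.

Lemma T_dlS k : (k < n)%N -> IxV (dl k.+1) = dl k.
Proof.
move=> kn; apply/funext => -[j [m i]]; rewrite /IxV /dl.
case: ifP => H.
  by rewrite inordK // eqSS.
have im : nat_of_ord i = m by have := ltn_ord i; move: H; lia.
case: (j == j0) => //=; case: eqP => //= mn.
by rewrite im mn; case: eqP => // ?; lia.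
Qed.

Definition p0 (k : nat) : X := (j0, existT (fun m => 'I_m.+1) n (inord k)).

Lemma dl_p0 k (kn : (k <= n)%N) (x : X) :
  (abs2 (dl k x))%:E = (if x \in [set p0 k]%classic then 1 else 0)%E.
Proof.
case: (boolP (x \in [set p0 k]%classic)) => H.
  have -> : x = p0 k by move: H; rewrite inE.
  by rewrite /dl /p0 !eqxx inordK // eqxx /= abs2_1.
move: H; case: x => j [m i]; rewrite /dl.
case: (boolP [&& _, _ & _]) => [/and3P[/eqP -> /eqP mn /eqP ik]|_ _].
  subst m; move=> /negP H; exfalso; apply: H; apply/mem_set; rewrite /p0.
  by congr pair; congr existT; apply: val_inj; rewrite /= inordK // -ik.
by rewrite abs2_0.
Qed.

Lemma sqnorm_dl k : (k <= n)%N -> sqnorm (dl k) = 1%E.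
Proof.
move=> kn; rewrite /sqnorm (eq_esum (b := fun x => if x \in [set p0 k]%classic then 1%E else 0%E)).
  by rewrite -esum_mkcond esum_set1.
by move=> x _; rewrite dl_p0.
Qed.

Lemma l2_dl k : (k <= n)%N -> l2 (dl k).
Proof. by move=> kn; rewrite /l2 sqnorm_dl // ltry. Qed.

Lemma sqnorm_sl k : (k <= n)%N -> sqnorm (sl k) = (k.+1%:R)%:E.
Proof.
elim: k => [|k IH] kn.
  rewrite -(sqnorm_dl kn); congr esum; apply/funext => -[j [m i]].
  by rewrite /sl /dl leqn0.
rewrite /sqnorm (eq_esum (b := fun x => (abs2 (sl k x))%:E + (abs2 (dl k.+1 x))%:E)%E).
  rewrite esumD; last 2 first.
    by move=> x _; rewrite lee_fin abs2_ge0.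
    by move=> x _; rewrite lee_fin abs2_ge0.
  rewrite -/(sqnorm (sl k)) -/(sqnorm (dl k.+1)) IH ?sqnorm_dl //; last by lia.
  by rewrite -[in RHS]natr1 EFinD.
move=> -[j [m i]] _; rewrite /sl /dl -EFinD.
case: (j == j0) => /=; last by rewrite abs2_0 addr0.
case: (m == n) => /=; last by rewrite abs2_0 addr0.
rewrite leq_eqVlt ltnS.
case: (boolP (val i == k.+1)) => [/eqP ->|]; first by rewrite ltnn /= abs2_0 add0r.
by rewrite /= abs2_0 addr0.
Qed.

Lemma sl0 : sl 0 = dl 0.
Proof. by apply/funext => -[j [m i]]; rewrite /sl /dl leqn0. Qed.

Lemma slS k x : sl k.+1 x = sl k x + dl k.+1 x.
Proof.
case: x => j [m i]; rewrite /sl /dl.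
case: (j == j0) => /=; last by rewrite addr0.
case: (m == n) => /=; last by rewrite addr0.
rewrite leq_eqVlt ltnS.
case: (boolP (nat_of_ord i == k.+1)) => [/eqP ->|]; first by rewrite ltnn /= add0r.
by rewrite /= addr0.
Qed.

End Aux.

Theorem lemma2p2 (R : realType) (J : choiceType) (j0 : J) :
  ~ strongly_clean (@IxV R J).
Proof.
move=> [U [P [[bU [W [bW [WU UW]]]] [[bP PP] [PT TUP]]]]].
case: bW => _ linW [M HM].
case: bP => l2P linP _.
case: bU => l2U linU _.
have lin0 : forall A : (J * hidx -> R[i]) -> (J * hidx -> R[i]),
    (forall (a : R[i]) f g, l2 f -> l2 g ->
       A (fun x => a * f x + g x) = (fun x => a * A f x + A g x)) ->
    A (fun _ => 0) = (fun _ => 0).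
  move=> A lA; have := lA (-1) _ _ (@l2_0 R J) (@l2_0 R J).
  have -> : (fun x : J * hidx => -1 * (0 : R[i]) + 0) = (fun _ => 0).
    by apply/funext => x; rewrite mulr0 addr0.
  move=> H; apply/funext => x; have := congr1 (fun f => f x) H => /= ->.
  by rewrite mulN1r addNr.
have step : forall h, l2 h -> P (IxV h) = IxV h -> P h = h.
  move=> h hl PTh.
  have TPh : IxV (P h) = IxV h by have := PT h hl; rewrite /op_comp => <-.
  have UPh : U (P h) = U h.
    apply/funext => x.
    have e1 := congr1 (fun f => f x) (TUP h hl).
    have e2 := congr1 (fun f => f x) (TUP (P h) (l2P h hl)).
    rewrite /op_add /= in e1 e2.
    have PPh : P (P h) = P h by exact: (PP h hl).
    rewrite PPh TPh e1 in e2.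
    exact: (addIr _ (esym e2)).
  have := WU h hl; have := WU (P h) (l2P h hl); rewrite /op_comp /op_id UPh.
  by move=> -> ->.
set n := Num.truncn M.
have Pdl : forall k, (k <= n)%N -> P (dl R j0 n k) = dl R j0 n k.
  elim => [|k IH] kn.
    apply: step; first exact: l2_dl.
    by rewrite T_dl0; exact: lin0 linP.
  apply: step; first exact: l2_dl.
  by rewrite T_dlS //; apply: IH; lia.
have W0 := lin0 W linW.
have Wdl : forall k, (k <= n)%N -> W (dl R j0 n k) = (fun x => - sl R j0 n k x).
  elim => [|k IH] kn.
    have e : U (dl R j0 n 0) = (fun x => -1 * dl R j0 n 0 x + (fun _ => 0) x).
      apply/funext => x.
      have := congr1 (fun f => f x) (TUP _ (l2_dl R j0 kn)).
      rewrite /op_add Pdl // T_dl0 /= => H.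
      rewrite mulN1r addr0; apply/eqP; rewrite -subr_eq0 opprK -H //.
    have := WU _ (l2_dl R j0 kn); rewrite /op_comp /op_id e linW ?W0;
      [|exact: l2_dl|exact: l2_0].
    move=> H; apply/funext => x; have := congr1 (fun f => f x) H => /=.
    rewrite addr0 mulN1r sl0 => <-; by rewrite opprK.
  have kn' : (k <= n)%N by lia.
  have e : U (dl R j0 n k.+1) = (fun x => -1 * dl R j0 n k.+1 x + dl R j0 n k x).
    apply/funext => x.
    have := congr1 (fun f => f x) (TUP _ (l2_dl R j0 kn)).
    rewrite /op_add Pdl // T_dlS // /= => H.
    by rewrite H mulN1r addrC -addrA subrr addr0.
  have := WU _ (l2_dl R j0 kn); rewrite /op_comp /op_id e linW;
    [|exact: l2_dl|exact: l2_dl].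
  rewrite IH //.
  move=> H; apply/funext => x; have := congr1 (fun f => f x) H => /=.
  rewrite slS => <-.
  by rewrite mulN1r addrC -addrA [_ + sl _ _ _ _ _]addrC subrr addr0 opprK.
have := HM _ (l2_dl R j0 (leqnn n)).
rewrite Wdl // sqnorm_dl // mule1.
have -> : sqnorm (fun x => - sl R j0 n n x) = sqnorm (sl R j0 n n).
  by apply: eq_esum => x _; rewrite abs2_N.
rewrite sqnorm_sl // lee_fin.
by move=> /(lt_le_trans (Num.Theory.truncnS_gt M)); rewrite ltxx.
Qed.
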